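(* Let $Q$ be a non-degenerate non-definite hermitian form on $\mathbb{C}^N$, and let $(w_1,\dots,w_N)$ be a basis of $\mathbb{C}^N$ with $Q(w_i)=0$ for $1\le i\le N$ and $Q(w_i,w_j)\ne0$ for $1\le i\ne j\le N$. Let $G_i$ be the stabilizer of $w_i$ in $SU(Q)$. Then the smallest closed subgroup of $SU(Q)$ containing $G_1,\dots,G_N$ is $SU(Q)$.
   Context: $Q(u)$ denotes $Q(u,u)$; $SU(Q)$ is the group of determinant-one linear automorphisms of $\mathbb{C}^N$ preserving $Q$; ''closed'' refers to the usual topology. *)

(* Defs.v *)
From mathcomp Require Import all_boot all_algebra.
From mathcomp Require Import complex.
From mathcomp Require Import all_classical all_reals topology normedtype.
Import GRing.Theory Num.Theory numFieldNormedType.Exports.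

Set Implicit Arguments.
Unset Strict Implicit.
Unset Printing Implicit Defensive.

Local Open Scope classical_set_scope.
Local Open Scope ring_scope.

Section Defs.
Variable R : realType.
Local Notation C := R[i].

Definition adjmx (m n : nat) (A : 'M[C]_(m, n)) : 'M[C]_(n, m) :=
  (map_mx (fun z : C => z^*) A)^T.

Definition hermitian_mx (N : nat) (H : 'M[C]_N) : Prop := adjmx H = H.

(* Q(u, v) = u^* H v : conjugate-linear in u, linear in v *)
Definition Qform (N : nat) (H : 'M[C]_N) (u v : 'cV[C]_N) : C :=
  (adjmx u *m H *m v) 0 0.

Definition hf_nondegenerate (N : nat) (H : 'M[C]_N) : Prop := H \in unitmx.

(* non-definite: Q(u) takes both (strictly) positive and negative values
   (the order on C = R[i] is: 0 < z iff z is real and positive) *)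
Definition hf_nondefinite (N : nat) (H : 'M[C]_N) : Prop :=
  (exists u, 0 < Qform H u u) /\ (exists v, Qform H v v < 0).

Definition SUQ (N : nat) (H : 'M[C]_N) : set 'M[C]_N :=
  [set g | \det g = 1 /\ forall u v, Qform H (g *m u) (g *m v) = Qform H u v].

Definition stabQ (N : nat) (H : 'M[C]_N) (w : 'cV[C]_N) : set 'M[C]_N :=
  [set g | SUQ H g /\ g *m w = w].

Definition is_basis_fam (N : nat) (w : 'I_N -> 'cV[C]_N) : Prop :=
  (\matrix_(i, j) w j i 0) \in unitmx.

(* usual topology on M_N(C) ~ (R^2)^(N x N) *)
Definition mx_of_pairs (N : nat) (B : 'M[R * R]_N) : 'M[C]_N :=
  \matrix_(i, j) (Complex (B i j).1 (B i j).2 : C).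

Definition mx_closed (N : nat) (S : set 'M[C]_N) : Prop :=
  closed [set B : 'M[R * R]_N | S (mx_of_pairs B)].

Definition is_subgroup (N : nat) (S : set 'M[C]_N) : Prop :=
  [/\ S 1%:M,
      (forall g h, S g -> S h -> S (g *m h)) &
      (forall g, S g -> S (invmx g))].

Definition closed_subgroup_gen (N : nat) (H : 'M[C]_N) (I : Type)
    (A : I -> set 'M[C]_N) : set 'M[C]_N :=
  \bigcap_(S in [set S : set 'M[C]_N | [/\ S `<=` SUQ H, is_subgroup S,
                                          mx_closed S & forall i, A i `<=` S]]) S.

End Defs.

(* Main.v *)
Require Import Defs.
From mathcomp Require Import all_boot all_algebra.
From mathcomp Require Import complex.
From mathcomp Require Import all_classical all_reals topology normedtype.
From mathcomp Require Import ring lra.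
Import GRing.Theory Num.Theory numFieldNormedType.Exports.
Local Open Scope classical_set_scope.
Local Open Scope ring_scope.
Set Implicit Arguments.
Unset Strict Implicit.
Unset Printing Implicit Defensive.

Lemma entry_cont (T : topologicalType) m n i j :
  continuous (fun M : 'M[T]_(m, n) => M i j).
Proof.
move=> M A /= hA.
exists (fun i' j' => if (i' == i) && (j' == j) then A else setT).
  move=> i' j'; case: (i' =P i) => [->|_]; case: (j' =P j) => [->|_] /= //; apply: filterT.
by move=> N /(_ i j); rewrite !eqxx.
Qed.

Section Clos.
Variable R : realType.
Variable N : nat.
Local Notation C := R[i].
Local Notation MT := 'M[R * R]_N.

Definition rc (f : MT -> C) :=
  continuous (fun B : MT => complex.Re (f B)) /\ continuous (fun B : MT => complex.Im (f B)).

Lemma rc_cst (c : C) : rc (fun _ => c).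
Proof. by split; apply: cst_continuous. Qed.

Lemma rc_entry i j : rc (fun B : MT => mx_of_pairs B i j).
Proof.
split.
- have -> : (fun B : MT => complex.Re (mx_of_pairs B i j)) = fst \o (fun B : MT => B i j).
    by apply: funext => B; rewrite mxE.
  move=> B; apply: continuous_comp; first exact: entry_cont.
  exact: cvg_fst.
- have -> : (fun B : MT => complex.Im (mx_of_pairs B i j)) = snd \o (fun B : MT => B i j).
    by apply: funext => B; rewrite mxE.
  move=> B; apply: continuous_comp; first exact: entry_cont.
  exact: cvg_snd.
Qed.

Lemma rcD f g : rc f -> rc g -> rc (fun B => f B + g B).
Proof.
move=> [f1 f2] [g1 g2]; split => B.
- have -> : (fun B : MT => complex.Re (f B + g B)) = (fun B : MT => complex.Re (f B) + complex.Re (g B)).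
    by apply: funext => B'; case: (f B') => ? ?; case: (g B') => ? ?.
  exact: (continuousD (f1 B) (g1 B)).
- have -> : (fun B : MT => complex.Im (f B + g B)) = (fun B : MT => complex.Im (f B) + complex.Im (g B)).
    by apply: funext => B'; case: (f B') => ? ?; case: (g B') => ? ?.
  exact: (continuousD (f2 B) (g2 B)).
Qed.

Lemma rcM f g : rc f -> rc g -> rc (fun B => f B * g B).
Proof.
move=> [f1 f2] [g1 g2]; split => B.
- have -> : (fun B : MT => complex.Re (f B * g B)) =
     (fun B : MT => complex.Re (f B) * complex.Re (g B) - complex.Im (f B) * complex.Im (g B)).
    by apply: funext => B'; case: (f B') => ? ?; case: (g B') => ? ?.
  exact: (continuousB (continuousM (f1 B) (g1 B)) (continuousM (f2 B) (g2 B))).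
- have -> : (fun B : MT => complex.Im (f B * g B)) =
     (fun B : MT => complex.Re (f B) * complex.Im (g B) + complex.Im (f B) * complex.Re (g B)).
    by apply: funext => B'; case: (f B') => ? ?; case: (g B') => ? ?.
  exact: (continuousD (continuousM (f1 B) (g2 B)) (continuousM (f2 B) (g1 B))).
Qed.

Lemma rcJ f : rc f -> rc (fun B => (f B)^*).
Proof.
move=> [f1 f2]; split => B.
- have -> : (fun B : MT => complex.Re ((f B)^*)) = (fun B : MT => complex.Re (f B)).
    by apply: funext => B'; case: (f B') => ? ?.
  exact: f1.
- have -> : (fun B : MT => complex.Im ((f B)^*)) = (fun B : MT => - complex.Im (f B)).
    by apply: funext => B'; case: (f B') => ? ?.
  exact: (continuousN (f2 B)).
Qed.

Lemma rc_sum (I : Type) (r : seq I) (P : pred I) (F : I -> MT -> C) :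
  (forall i, rc (F i)) -> rc (fun B => \sum_(i <- r | P i) F i B).
Proof.
move=> hF; elim: r => [|a r IH].
  have -> : (fun B => \sum_(i <- [::] | P i) F i B) = (fun _ => 0).
    by apply: funext => B; rewrite big_nil.
  exact: rc_cst.
have -> : (fun B => \sum_(i <- a :: r | P i) F i B) =
   (fun B => (if P a then F a B else 0) + \sum_(i <- r | P i) F i B).
  by apply: funext => B; rewrite big_cons; case: (P a); rewrite ?add0r.
apply: rcD => //; case: (P a) => //; exact: rc_cst.
Qed.

Lemma rc_prod (I : Type) (r : seq I) (P : pred I) (F : I -> MT -> C) :
  (forall i, rc (F i)) -> rc (fun B => \prod_(i <- r | P i) F i B).
Proof.
move=> hF; elim: r => [|a r IH].
  have -> : (fun B => \prod_(i <- [::] | P i) F i B) = (fun _ => 1).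
    by apply: funext => B; rewrite big_nil.
  exact: rc_cst.
have -> : (fun B => \prod_(i <- a :: r | P i) F i B) =
   (fun B => (if P a then F a B else 1) * \prod_(i <- r | P i) F i B).
  by apply: funext => B; rewrite big_cons; case: (P a); rewrite ?mul1r.
apply: rcM => //; case: (P a) => //; exact: rc_cst.
Qed.

Definition rcmx m n (A : MT -> 'M[C]_(m, n)) := forall i j, rc (fun B => A B i j).

Lemma rcmx_cst m n (A : 'M[C]_(m, n)) : rcmx (fun _ => A).
Proof. by move=> i j; exact: rc_cst. Qed.

Lemma rcmx_P : rcmx (@mx_of_pairs R N).
Proof. by move=> i j; exact: rc_entry. Qed.

Lemma rcmx_mul m n p (A : MT -> 'M[C]_(m, n)) (A' : MT -> 'M[C]_(n, p)) :
  rcmx A -> rcmx A' -> rcmx (fun B => A B *m A' B).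
Proof.
move=> hA hA' i j.
have -> : (fun B => (A B *m A' B) i j) = (fun B => \sum_k A B i k * A' B k j).
  by apply: funext => B; rewrite mxE.
by apply: rc_sum => k; apply: rcM.
Qed.

Lemma rcmx_adj m n (A : MT -> 'M[C]_(m, n)) : rcmx A -> rcmx (fun B => adjmx (A B)).
Proof.
move=> hA i j.
have -> : (fun B => adjmx (A B) i j) = (fun B => (A B j i)^*).
  by apply: funext => B; rewrite !mxE.
exact: rcJ.
Qed.

Lemma rc_det (A : MT -> 'M[C]_N) : rcmx A -> rc (fun B => \det (A B)).
Proof.
move=> hA; rewrite /determinant.
apply: rc_sum => s; apply: rcM; first exact: rc_cst.
by apply: rc_prod => i; exact: hA.
Qed.

Lemma rc_closed (f : MT -> C) (c : C) : rc f -> closed [set B | f B = c].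
Proof.
move=> [f1 f2].
have -> : [set B | f B = c] =
  (fun B => complex.Re (f B)) @^-1` [set complex.Re c] `&`
  (fun B => complex.Im (f B)) @^-1` [set complex.Im c].
  apply/seteqP; split => B /=.
    by move=> ->.
  by case: (f B) => a b; case: c => a' b' /= [-> ->].
apply: closedI.
  by apply: preimage_closed => // x _; exact: f1.
by apply: preimage_closed => // x _; exact: f2.
Qed.

End Clos.

Section SUQclosed.
Variable R : realType.
Variable N : nat.
Variable H : 'M[R[i]]_N.

Lemma SUQ_closed : mx_closed (SUQ H).
Proof.
rewrite /mx_closed.
have -> : [set B : 'M[R * R]_N | SUQ H (mx_of_pairs B)] =
  [set B | \det (mx_of_pairs B) = 1] `&`
  \bigcap_(uv in [set: 'cV[R[i]]_N * 'cV[R[i]]_N])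
     [set B | Qform H (mx_of_pairs B *m uv.1) (mx_of_pairs B *m uv.2) = Qform H uv.1 uv.2].
  apply/seteqP; split => B /=.
    by move=> [h1 h2]; split => // -[u v] _ /=; exact: h2.
  by move=> [h1 h2]; split => // u v; exact: (h2 (u, v)).
apply: closedI.
  apply: rc_closed; apply: rc_det; exact: rcmx_P.
apply: closed_bigI => -[u v] _ /=; apply: rc_closed.
rewrite /Qform.

have h := (rcmx_mul (rcmx_mul (rcmx_adj (rcmx_mul (@rcmx_P R N) (rcmx_cst N u))) (rcmx_cst N H))
   (rcmx_mul (@rcmx_P R N) (rcmx_cst N v)) 0 0).
exact: h.
Qed.

End SUQclosed.

Section Alg.
Variables (R : realType) (N : nat) (H : 'M[R[i]]_N).
Hypothesis hH : hermitian_mx H.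
Local Notation C := R[i].
Local Notation Q := (Qform H).

Lemma adjmxD m n (A B : 'M[C]_(m, n)) : adjmx (A + B) = adjmx A + adjmx B.
Proof. by apply/matrixP => i j; rewrite !mxE rmorphD. Qed.

Lemma adjmxN m n (A : 'M[C]_(m, n)) : adjmx (- A) = - adjmx A.
Proof. by apply/matrixP => i j; rewrite !mxE rmorphN. Qed.

Lemma adjmxZ m n a (A : 'M[C]_(m, n)) : adjmx (a *: A) = a^* *: adjmx A.
Proof. by apply/matrixP => i j; rewrite !mxE rmorphM. Qed.

Lemma adjmxM m n p (A : 'M[C]_(m, n)) (B : 'M[C]_(n, p)) :
  adjmx (A *m B) = adjmx B *m adjmx A.
Proof.
apply/matrixP => i j; rewrite !mxE rmorph_sum; apply: eq_bigr => k _.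
by rewrite !mxE rmorphM mulrC.
Qed.

Lemma adjmxK m n (A : 'M[C]_(m, n)) : adjmx (adjmx A) = A.
Proof. by apply/matrixP => i j; rewrite !mxE conjCK. Qed.

Lemma QDl u1 u2 v : Q (u1 + u2) v = Q u1 v + Q u2 v.
Proof. by rewrite /Qform adjmxD !mulmxDl mxE. Qed.
Lemma QDr u v1 v2 : Q u (v1 + v2) = Q u v1 + Q u v2.
Proof. by rewrite /Qform !mulmxDr mxE. Qed.
Lemma QZl a u v : Q (a *: u) v = a^* * Q u v.
Proof. by rewrite /Qform adjmxZ -!scalemxAl mxE. Qed.
Lemma QZr a u v : Q u (a *: v) = a * Q u v.
Proof. by rewrite /Qform -!scalemxAr mxE. Qed.
Lemma QNl u v : Q (- u) v = - Q u v.
Proof. by rewrite -scaleN1r QZl rmorphN rmorph1 mulN1r. Qed.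
Lemma QNr u v : Q u (- v) = - Q u v.
Proof. by rewrite -scaleN1r QZr mulN1r. Qed.
Lemma QBl u1 u2 v : Q (u1 - u2) v = Q u1 v - Q u2 v.
Proof. by rewrite QDl QNl. Qed.
Lemma QBr u v1 v2 : Q u (v1 - v2) = Q u v1 - Q u v2.
Proof. by rewrite QDr QNr. Qed.
Lemma Q0l v : Q 0 v = 0.
Proof. by rewrite -(scale0r 0) QZl rmorph0 mul0r. Qed.
Lemma Q0r u : Q u 0 = 0.
Proof. by rewrite -(scale0r 0) QZr mul0r. Qed.

Lemma QC u v : (Q u v)^* = Q v u.
Proof.
rewrite /Qform.
have -> : ((adjmx u *m H *m v) 0 0)^* = adjmx (adjmx u *m H *m v) 0 0 by rewrite !mxE.
by rewrite !adjmxM adjmxK hH mulmxA.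
Qed.


Ltac qsimp := rewrite ?(QDl, QDr, QBl, QBr, QNl, QNr, QZl, QZr, Q0l, Q0r).

Definition dag u : 'rV[C]_N := adjmx u *m H.

Lemma mulmx11 m (x : 'cV[C]_m) (r : 'rV[C]_N) (v : 'cV[C]_N) :
  x *m r *m v = (r *m v) 0 0 *: x.
Proof. by rewrite -mulmxA {1}[r *m v]mx11_scalar mul_mx_scalar. Qed.

Lemma dagE u v : (dag u *m v) 0 0 = Q u v.
Proof. by []. Qed.

Definition Eich w y a : 'M[C]_N :=
  1%:M + y *m dag w - w *m dag y + a *: (w *m dag w).

Lemma EichE w y a x :
  Eich w y a *m x = x + Q w x *: y - Q y x *: w + (a * Q w x) *: w.
Proof.
rewrite /Eich !mulmxDl mulNmx mul1mx -scalemxAl !mulmx11 !dagE scalerA.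
by rewrite (mulrC a).
Qed.

Lemma det_rank1 n (c : 'cV[R[i]]_n) (r : 'rV[R[i]]_n) :
  \det (1%:M + c *m r) = 1 + (r *m c) 0 0 :> R[i].
Proof.
have e1 : block_mx 1%:M (- r) c 1%:M =
    block_mx 1%:M 0 c 1%:M *m block_mx 1%:M (- r) 0 (1%:M + c *m r).
  rewrite mulmx_block ?mul1mx ?mul0mx ?mulmx1 ?mulmx0 ?addr0 ?add0r.
  by rewrite mulmxN (addrC 1%:M) addKr.
have e2 : block_mx 1%:M (- r) c 1%:M =
    block_mx (1%:M + r *m c) (- r) 0 1%:M *m block_mx 1%:M 0 c 1%:M.
  rewrite mulmx_block ?mul1mx ?mul0mx ?mulmx1 ?mulmx0 ?addr0 ?add0r.
  by rewrite mulNmx addrK.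
have := congr1 determinant e1; rewrite e2 !det_mulmx det_lblock det_ublock.
rewrite det_ublock !det1 !mul1r !mulr1 => <-.
by rewrite det_mx11 mxE [in X in X + _]mxE eqxx.
Qed.


Lemma Eich_iso w y a : Q w w = 0 -> Q w y = 0 -> a + a^* + Q y y = 0 ->
  forall u v, Q (Eich w y a *m u) (Eich w y a *m v) = Q u v.
Proof.
move=> hww hwy ha u v.
have hyw : Q y w = 0 by rewrite -QC hwy rmorph0.
have ha' : a^* = - a - Q y y.
  have -> : a^* = (a + a^* + Q y y) - a - Q y y by ring.
  by rewrite ha sub0r.
rewrite !EichE.
rewrite !(QDl, QDr, QBl, QBr, QNl, QNr, QZl, QZr) hww hwy hyw.
rewrite -[Q u y]QC -[Q u w]QC !(rmorphM, rmorphB, rmorphD) /= ha'.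
move: (Q u v) (Q w v) (Q y v) (Q y y) ((Q w u)^*) ((Q y u)^*) (a) => A B C D E F G.
ring.
Qed.

Lemma dag_self w : Q w w = 0 -> dag w *m w = 0.
Proof. by move=> h; rewrite [dag w *m w]mx11_scalar dagE h raddf0. Qed.

Lemma Eich_det w y a : Q w w = 0 -> Q w y = 0 -> \det (Eich w y a) = 1.
Proof.
move=> hww hwy.
have hyw : Q y w = 0 by rewrite -QC hwy rmorph0.
have -> : Eich w y a = (1%:M + y *m dag w) *m (1%:M + w *m (a *: dag w - dag y)).
  set Z := a *: dag w - dag y.
  have e : y *m dag w *m (w *m Z) = 0 by rewrite mulmxA -(mulmxA y) dag_self // mulmx0 mul0mx.
  rewrite mulmxDr mulmx1 mulmxDl mul1mx e addr0 /Z mulmxBr -(scalemxAr a w (dag w)) /Eich.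
  by rewrite (addrC (a *: _)) addrA.
rewrite det_mulmx !det_rank1 dagE mulmxBl -scalemxAl dag_self // scaler0 sub0r.
by rewrite mxE dagE hwy hyw oppr0 !addr0 mulr1.
Qed.

Lemma Eich_stab w y a : Q w w = 0 -> Q w y = 0 -> a + a^* + Q y y = 0 ->
  stabQ H w (Eich w y a).
Proof.
move=> hww hwy ha.
have hyw : Q y w = 0 by rewrite -QC hwy rmorph0.
split; first by split; [exact: Eich_det | exact: Eich_iso].
by rewrite EichE hww hyw mulr0 !scale0r subr0 !addr0.
Qed.

Lemma TL w x x' : Q w w = 0 -> Q x x = 0 -> Q x' x' = 0 -> Q w x = Q w x' ->
  Q w x != 0 -> exists h, stabQ H w h /\ h *m x = x'.
Proof.
move=> hww hxx hx'x' hwx hc.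
set c := Q w x in hwx hc.
set y := c^-1 *: (x' - x).
set a := Q y x / c.
have hx' : x' = x + c *: y by rewrite /y scalerA mulfV // scale1r addrC subrK.
have hwy : Q w y = 0 by rewrite /y QZr QBr -hwx subrr mulr0.
have hcc : c^* != 0 by rewrite conjC_eq0.
have E : c^* * Q y x + c * Q x y + c^* * c * Q y y = 0.
  move: hx'x'; rewrite hx' !(QDl, QDr, QZl, QZr) hxx.
  move: (Q x y) (Q y x) (Q y y) (c) (c^*) => A B D c1 c2 <-; ring.
have ha : a + a^* + Q y y = 0.
  rewrite /a rmorphM fmorphV /= QC.
  have -> : Q y x / c + Q x y / c^* + Q y y =
      (c^* * Q y x + c * Q x y + c^* * c * Q y y) / (c * c^*).
    by field; apply/andP; split; [exact: hcc | exact: hc].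
  by rewrite E mul0r.
exists (Eich w y a); split; first exact: Eich_stab.
by rewrite EichE -/c /a divfK // -hx' subrK.
Qed.

Lemma adjmx_delta n (k : 'I_n) : adjmx (delta_mx k 0 : 'cV[C]_n) = delta_mx 0 k.
Proof.
apply/matrixP => i j; rewrite !mxE.
by case: (j == k); case: (i == 0); rewrite /= ?conjC1 ?conjC0.
Qed.

Lemma nondeg v : H \in unitmx -> v != 0 -> exists y, Q y v != 0.
Proof.
move=> hU hv.
have hHv : H *m v != 0.
  apply: contraNneq hv => h; by rewrite -(mulKmx hU v) h mulmx0.
have [k hk] : exists k, (H *m v) k 0 != 0.
  case: (pickP (fun k => (H *m v) k 0 != 0)) => [k hk | h0]; first by exists k.
  case/eqP: hHv; apply/matrixP => i j; rewrite (ord1 j).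
  by move/negbFE/eqP: (h0 i) => ->; rewrite mxE.
exists (delta_mx k 0); rewrite /Qform adjmx_delta -mulmxA -rowE mxE.
exact: hk.
Qed.

Lemma stab1 w : stabQ H w 1%:M.
Proof. by split; [split; [exact: det1 | by move=> u v; rewrite !mul1mx] | rewrite mul1mx]. Qed.

Lemma step1 w1 w2 v : Q w1 w1 = 0 -> Q w1 w2 != 0 -> H \in unitmx -> v != 0 ->
  exists s, stabQ H w1 s /\ Q w2 (s *m v) != 0.
Proof.
move=> h11 hc hU hv.
have hc' : Q w2 w1 != 0 by rewrite -QC conjC_eq0.
case: (Q w2 v =P 0) => h2; last by exists 1%:M; split; [exact: stab1 | rewrite mul1mx; apply/eqP].
case: (Q w1 v =P 0) => h1.
- have [y hy] := nondeg hU hv.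
  set u := y - (Q w1 y / Q w1 w2) *: w2.
  have hw1u : Q w1 u = 0 by rewrite /u QBr QZr divfK // subrr.
  have huv : Q u v = Q y v by rewrite /u QBl QZl h2 mulr0 subr0.
  set a := - (Q u u) / 2%:R.
  have ha : a + a^* + Q u u = 0.
    rewrite /a rmorphM rmorphN fmorphV /= QC conjC_nat.
    have h20 : (2%:R : C) != 0 by rewrite pnatr_eq0.
    by field.
  exists (Eich w1 u a); split; first exact: Eich_stab.
  rewrite EichE !(QDr, QBr, QNr, QZr) h2 h1 huv !(mulr0, add0r, subr0, addr0, mul0r).
  by rewrite oppr_eq0 mulf_neq0.
- have ha : 'i + 'i^* + Q 0 0 = 0 :> C by rewrite conjCi Q0l addr0 subrr.
  exists (Eich w1 0 'i); split; first by apply: Eich_stab => //; rewrite Q0r.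
  rewrite EichE !(QDr, QBr, QNr, QZr) h2 Q0l Q0r !(mulr0, add0r, subr0, addr0, mul0r).
  by rewrite oppr0 add0r !mulf_neq0 // ?neq0Ci //; apply/eqP.
Qed.

Lemma SUQ_unit g : SUQ H g -> g \in unitmx.
Proof. by case=> hd _; rewrite unitmxE hd unitr1. Qed.

Lemma SUQ_mul g h : SUQ H g -> SUQ H h -> SUQ H (g *m h).
Proof.
move=> [hg1 hg2] [hh1 hh2]; split; first by rewrite det_mulmx hg1 hh1 mulr1.
by move=> u v; rewrite -!mulmxA hg2 hh2.
Qed.

Lemma SUQ_inv g : SUQ H g -> SUQ H (invmx g).
Proof.
move=> hg; have hu := SUQ_unit hg; case: hg => [hg1 hg2]; split.
  by rewrite det_inv hg1 invr1.
by move=> u v; rewrite -hg2 !mulKVmx.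
Qed.

Lemma SUQ_sub : is_subgroup (SUQ H).
Proof.
split; [by case: (stab1 0) | exact: SUQ_mul | exact: SUQ_inv].
Qed.

Variables (w : 'I_N -> 'cV[C]_N) (i1 i2 : 'I_N).
Hypothesis hU : H \in unitmx.
Hypothesis hb : is_basis_fam w.
Hypothesis hiso : forall i, Q (w i) (w i) = 0.
Hypothesis hne : i1 != i2.
Hypothesis hc : Q (w i1) (w i2) != 0.

Local Notation w1 := (w i1).
Local Notation w2 := (w i2).

Lemma hc' : Q w2 w1 != 0.
Proof. by rewrite -QC conjC_eq0. Qed.

Definition proj y := (Q w2 y / Q w2 w1) *: w1 + (Q w1 y / Q w1 w2) *: w2.

Lemma proj_orth y : Q w1 (y - proj y) = 0 /\ Q w2 (y - proj y) = 0.
Proof.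
have h2 := hc'.
rewrite /proj; qsimp; rewrite !hiso.
by split; rewrite mulr0 ?add0r ?addr0 divfK // subrr.
Qed.

Lemma herm0 (a : C) : a + a^* = 0 -> 'i * a + (- 'i) * a^* = 0 -> a = 0.
Proof.
move=> e1 e2.
have : 2%:R * a = 0.
  have -> : 2%:R * a = (a + a^*) - 'i * ('i * a + (- 'i) * a^*).
    have -> : (a + a^*) - 'i * ('i * a + (- 'i) * a^*) = a + a^* - 'i ^+ 2 * a + 'i ^+ 2 * a^* by ring.
    rewrite sqrCi; ring.
  by rewrite e1 e2 mulr0 subr0.
by move/eqP; rewrite mulf_eq0 pnatr_eq0 /= => /eqP.
Qed.

Lemma span_all : (forall z, Q w1 z = 0 -> Q w2 z = 0 -> Q z z = 0) ->
  forall y, y = proj y.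
Proof.
move=> hno.
have pol : forall z1 z2, Q w1 z1 = 0 -> Q w2 z1 = 0 -> Q w1 z2 = 0 -> Q w2 z2 = 0 ->
    Q z1 z2 = 0.
  move=> z1 z2 h11 h21 h12 h22.
  apply: herm0.
    have h : Q (z1 + z2) (z1 + z2) = 0 by apply: hno; qsimp; rewrite ?h11 ?h12 ?h21 ?h22 addr0.
    by move: h; qsimp; rewrite (hno z1) // (hno z2) // -[Q z2 z1]QC add0r addr0.
  have h : Q (z1 + 'i *: z2) (z1 + 'i *: z2) = 0.
    by apply: hno; qsimp; rewrite ?h11 ?h12 ?h21 ?h22 mulr0 addr0.
  move: h; qsimp; rewrite (hno z1) // (hno z2) // -[Q z2 z1]QC conjCi => h.
  by rewrite -[RHS]h; ring.
move=> y; apply/eqP; rewrite -subr_eq0; apply/eqP.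
set z := y - proj y.
have [hz1 hz2] := proj_orth y.
apply/eqP; apply: contraT => hz.
have [t ht] := nondeg hU hz.
have [ht1 ht2] := proj_orth t.
have e : forall z', Q w1 z' = 0 -> Q w2 z' = 0 -> Q t z' = Q (t - proj t) z'.
  by move=> z' h1 h2; rewrite /proj; qsimp; rewrite h1 h2 !mulr0 !addr0 subr0.
by move: ht; rewrite (e z hz1 hz2) (pol _ _ ht1 ht2 hz1 hz2) eqxx.
Qed.

Definition Wm : 'M[C]_N := \matrix_(i, j) w j i 0.

Lemma colW j : Wm *m delta_mx j 0 = w j.
Proof. by apply/matrixP => i k; rewrite (ord1 k) -colE !mxE. Qed.

Lemma all_idx : (forall y, y = proj y) -> forall k, (k == i1) || (k == i2).
Proof.
move=> hs k; apply: contraT; rewrite negb_or => /andP [h1 h2].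
set a := Q w2 (w k) / Q w2 w1; set b := Q w1 (w k) / Q w1 w2.
set e : 'cV[C]_N := delta_mx k 0 - (a *: delta_mx i1 0 + b *: delta_mx i2 0).
have hWe : Wm *m e = 0.
  rewrite /e mulmxBr mulmxDr -!scalemxAr !colW.
  by rewrite {1}(hs (w k)) subrr.
have : e = 0 by rewrite -(mulKmx hb e) hWe mulmx0.
move/matrixP/(_ k 0); rewrite /e !mxE !eqxx (negbTE h1) (negbTE h2) /=.
by rewrite !mulr0 addr0 subr0 => /eqP; rewrite oner_eq0.
Qed.

Lemma lam_real g2 lam : (forall k, (k == i1) || (k == i2)) -> SUQ H g2 ->
  g2 *m w1 = lam *: w1 -> g2 *m w2 = (lam^*)^-1 *: w2 -> lam = lam^*.
Proof.
move=> hall [hd _] e1 e2.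
set d : 'rV[C]_N := \row_j (if j == i1 then lam else (lam^*)^-1).
have hM : g2 *m Wm = Wm *m diag_mx d.
  apply/matrixP => i j; rewrite mul_mx_diag.
  have -> : (g2 *m Wm) i j = (g2 *m w j) i 0 by rewrite -colW mulmxA -colE [RHS]mxE.
  case/orP: (hall j) => /eqP ->.
    by rewrite e1 !mxE eqxx mulrC.
  by rewrite e2 !mxE eq_sym (negbTE hne) mulrC.
have := congr1 determinant hM; rewrite !det_mulmx hd mul1r det_diag.
rewrite (bigD1 i1) //= (bigD1 i2) /=; last by rewrite eq_sym.
rewrite big1 ?mulr1.
2:{ move=> j /andP [hj1 hj2].
  by case/orP: (hall j) => /eqP e; [move: hj1 | move: hj2]; rewrite e eqxx. }
rewrite !mxE eqxx eq_sym (negbTE hne).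
have hW : \det Wm != 0 by rewrite -unitfE -unitmxE.
rewrite -{1}[\det Wm]mulr1 => /(mulfI hW) /esym.
exact: divr1_eq.
Qed.

Lemma mu_z g2 lam : SUQ H g2 -> g2 *m w1 = lam *: w1 -> g2 *m w2 = (lam^*)^-1 *: w2 ->
  lam != 0 ->
  exists mu z, [/\ mu != 0, lam^* * mu + lam * mu^* = 0, mu + mu^* + Q z z = 0,
                  Q w1 z = 0 & Q w2 z = 0].
Proof.
move=> hg e1 e2 hl.
case: (lam =P lam^*) => hr.
  exists ('i * lam), 0; split.
  - by rewrite mulf_neq0 ?neq0Ci.
  - by rewrite rmorphM /= conjCi; ring.
  - by rewrite rmorphM /= conjCi Q0r -hr; ring.
  - by rewrite Q0r.
  - by rewrite Q0r.
case: (pselect (exists z, [/\ Q w1 z = 0, Q w2 z = 0 & Q z z != 0])) => [[z [h1 h2 h3]] | hno].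
  set q := Q z z.
  have hq : q^* = q by rewrite /q QC.
  have hd : lam - lam^* != 0 by rewrite subr_eq0; apply/eqP.
  have hd' : lam^* - lam != 0 by rewrite subr_eq0 eq_sym; apply/eqP.
  exists (- q / (lam - lam^*) * lam), z; split => //.
  - by rewrite !mulf_neq0 ?oppr_eq0 ?invr_eq0.
  - rewrite !(rmorphM, rmorphN, fmorphV, rmorphB) /= conjCK hq.
    by field; apply/andP; split; [exact: hd' | exact: hd].
  - rewrite !(rmorphM, rmorphN, fmorphV, rmorphB) /= conjCK hq -/q.
    by field; apply/andP; split; [exact: hd' | exact: hd].
exfalso; apply: hr; apply: (lam_real _ hg e1 e2).
apply: all_idx; apply: span_all => z h1 h2; apply/eqP; apply: contraT => h3.
by exfalso; apply: hno; exists z.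
Qed.

Lemma main_incl (S : set 'M[C]_N) : S `<=` SUQ H -> is_subgroup S ->
  stabQ H w1 `<=` S -> stabQ H w2 `<=` S -> SUQ H `<=` S.
Proof.
move=> hS [S1 Smul Sinv] hS1 hS2 g hg.
have hc2 := hc'.
have w1n0 : w1 != 0 by apply: contraNneq hc => ->; rewrite Q0l.
have hv : g *m w1 != 0.
  by apply: contraNneq w1n0 => h; rewrite -(mulKmx (SUQ_unit hg) w1) h mulmx0.
have [s1 [hs1 hs1v]] := step1 (hiso i1) hc hU hv.
have hSs1 : SUQ H s1 by case: hs1.
set v1 := s1 *m (g *m w1) in hs1v.
set lam := Q w2 v1 / Q w2 w1.
have hl : lam != 0 by rewrite mulf_neq0 ?invr_eq0.
have hlc : lam^* != 0 by rewrite conjC_eq0.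
have iso_v1 : Q v1 v1 = 0 by rewrite /v1 (proj2 hSs1) (proj2 hg) hiso.
have [h2 [hh2 hh2v]] : exists h, stabQ H w2 h /\ h *m v1 = lam *: w1.
  apply: (TL (hiso i2) iso_v1).
  - by qsimp; rewrite hiso !mulr0.
  - by rewrite QZr /lam divfK.
  - done.
set g1 := h2 *m s1 *m g.
have hg1 : SUQ H g1 by apply: SUQ_mul => //; apply: SUQ_mul => //; case: hh2.
have g1w1 : g1 *m w1 = lam *: w1 by rewrite /g1 -!mulmxA.
set u := g1 *m w2.
have hu : Q w1 u = Q w1 w2 / lam^*.
  by rewrite -(proj2 hg1 w1 w2) g1w1 QZl -/u mulrAC mulfV // mul1r.
have [h3 [hh3 hh3u]] : exists h, stabQ H w1 h /\ h *m u = (lam^*)^-1 *: w2.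
  apply: (TL (hiso i1)).
  - by rewrite /u (proj2 hg1) hiso.
  - by qsimp; rewrite hiso !mulr0.
  - by rewrite hu QZr mulrC.
  - by rewrite hu mulf_neq0 ?invr_eq0.
set g2 := h3 *m g1.
have hg2 : SUQ H g2 by apply: SUQ_mul => //; case: hh3.
have g2w1 : g2 *m w1 = lam *: w1.
  by rewrite /g2 -mulmxA g1w1 -scalemxAr (proj2 hh3).
have g2w2 : g2 *m w2 = (lam^*)^-1 *: w2 by rewrite /g2 -mulmxA hh3u.
have [mu [z [hmu hb1 hb2 hz1 hz2]]] := mu_z hg2 g2w1 g2w2 hl.
have hz1' : Q z w1 = 0 by rewrite -QC hz1 rmorph0.
have hz2' : Q z w2 = 0 by rewrite -QC hz2 rmorph0.
have hcc : (Q w1 w2)^* != 0 by rewrite conjC_eq0.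
set beta := mu / Q w1 w2.
have hbc : beta * Q w1 w2 = mu by rewrite /beta divfK.
have hbc' : beta^* * Q w2 w1 = mu^* by rewrite -QC -rmorphM hbc.
set x := lam *: w1 + beta *: w2.
set x' := w1 + beta *: w2 + z.
have hxx : Q x x = 0.
  rewrite /x; qsimp; rewrite !hiso !mulr0 !addr0 add0r.
  rewrite -hb1 -hbc' -hbc; ring.
have hx'x' : Q x' x' = 0.
  rewrite /x'; qsimp; rewrite !hiso hz1 hz2 hz1' hz2' !mulr0 !addr0 add0r.
  by rewrite add0r hbc hbc'.
have [h4 [hh4 hh4v]] : exists h, stabQ H w2 h /\ h *m (lam *: w1) = x.
  apply: (TL (hiso i2)) => //.
  - by qsimp; rewrite hiso !mulr0.
  - by rewrite /x; qsimp; rewrite hiso mulr0 addr0.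
  - by rewrite QZr mulf_neq0.
have [h5 [hh5 hh5v]] : exists h, stabQ H w1 h /\ h *m x = x'.
  apply: (TL (hiso i1) hxx hx'x').
  - by rewrite /x /x'; qsimp; rewrite !hiso hz1 !mulr0 !addr0 add0r.
  - by rewrite /x; qsimp; rewrite !hiso mulr0 add0r hbc.
have [h6 [hh6 hh6v]] : exists h, stabQ H w2 h /\ h *m x' = w1.
  apply: (TL (hiso i2) hx'x' (hiso i1)).
  - by rewrite /x'; qsimp; rewrite !hiso hz2 mulr0 !addr0.
  - by rewrite /x'; qsimp; rewrite !hiso hz2 mulr0 !addr0.
set T := h6 *m (h5 *m (h4 *m (h3 *m (h2 *m s1)))).
have hST : S T.
  apply Smul; first exact: hS2.
    apply Smul; first exact: hS1.
  apply Smul; first exact: hS2.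
  apply Smul; first exact: hS1.
  apply Smul; [exact: hS2 | exact: hS1].
have hTg : S (T *m g).
  apply: hS1; split; first exact: SUQ_mul (hS _ hST) hg.
  have -> : T *m g *m w1 = h6 *m (h5 *m (h4 *m (g2 *m w1))).
    by rewrite /T /g2 /g1 !mulmxA.
  by rewrite g2w1 hh4v hh5v hh6v.
have hTu : T \in unitmx := SUQ_unit (hS _ hST).
rewrite -(mulKmx hTu g).
exact: Smul (Sinv _ hST) hTg.
Qed.

End Alg.

Lemma two_idx (R : realType) (N : nat) (H : 'M[R[i]]_N) (w : 'I_N -> 'cV[R[i]]_N) :
  hf_nondegenerate H -> hf_nondefinite H -> is_basis_fam w ->
  (forall i, Qform H (w i) (w i) = 0) -> exists i1 i2 : 'I_N, i1 != i2.
Proof.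
case: N H w => [|[|n]] H w hU hnd hb hiso.
- case: hnd => [[u hu] _]; move: hu; rewrite /Qform mxE big_ord0.
  by rewrite preorder.Order.PreorderTheory.ltxx.
- exfalso; move: (hiso ord0); rewrite /Qform !mxE !big_ord1 !mxE big_ord1 !mxE.
  move: hb; rewrite /is_basis_fam unitmxE det_mx11 mxE unitfE => hw.
  move: hU; rewrite /hf_nondegenerate unitmxE det_mx11 unitfE => hH.
  by move/eqP; rewrite !mulf_eq0 conjC_eq0 (negbTE hw) (negbTE hH).
- by exists ord0, ord_max.
Qed.

Theorem mainTheorem13 (R : realType) (N : nat) (H : 'M[R[i]]_N)
    (w : 'I_N -> 'cV[R[i]]_N) :
  hermitian_mx H -> hf_nondegenerate H -> hf_nondefinite H ->
  is_basis_fam w ->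
  (forall i, Qform H (w i) (w i) = 0) ->
  (forall i j, i != j -> Qform H (w i) (w j) != 0) ->
  closed_subgroup_gen H (fun i => stabQ H (w i)) = SUQ H.
Proof.
move=> hH hU hnd hb hiso hne.
have [i1 [i2 hi]] := two_idx hU hnd hb hiso.
apply/seteqP; split => g.
- move=> hg; apply: (hg (SUQ H)); split => //.
  + exact: SUQ_sub.
  + exact: SUQ_closed.
  + by move=> i x [].
- move=> hg S [hS hsub hcl hA].
  exact: (main_incl hH hU hb hiso hi (hne _ _ hi) hS hsub (hA i1) (hA i2) hg).
Qed.
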